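(* The elements $H_k$, $k\in\mathbb Z$, generate the ring $\Lambda^{\pm}_m=\mathbb Z[x_1^{\pm1},\dots,x_m^{\pm1}]^{S_m}$.
   Context: For a sequence of integers $\lambda=(\lambda_1,\dots,\lambda_m)$, $E_\lambda$ is defined by $E_\lambda(x)\prod_{i<j}(x_i-x_j)=\sum_{\sigma\in S_m}\mathrm{sgn}(\sigma)\sigma(x_1^{\lambda_1+m-1}x_2^{\lambda_2+m-2}\cdots x_m^{\lambda_m})$, and $H_k=E_{(k,0,\dots,0)}$ for $k\in\mathbb Z$. *)

(* Defs.v *)
From HB Require Import structures.
From mathcomp Require Import all_boot all_order all_algebra all_fingroup.
From mathcomp Require Import mpoly.
Set Implicit Arguments. Unset Strict Implicit. Unset Printing Implicit Defensive.
Import Order.TTheory GRing.Theory Num.Theory.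
Local Open Scope ring_scope.

(* Ambient field: the fraction field Q(x_1..x_m) of Z[x_1..x_m]; the ring of
   Laurent polynomials Z[x_1^{+-1},..,x_m^{+-1}] is realized inside it.
   Variables are 0-indexed: x_i for i : 'I_m. *)
Definition Frac (m : nat) := {fraction {mpoly int[m]}}.

Definition xvar (m : nat) (i : 'I_m) : Frac m :=
  @FracField.tofrac {mpoly int[m]} 'X_i.

(* A Laurent polynomial given by a finite list of (coefficient, exponent vector),
   with the variables renamed by f (x_i |-> x_(f i)). *)
Definition lpoly_eval (m : nat) (s : seq (int * {ffun 'I_m -> int}))
    (f : 'I_m -> 'I_m) : Frac m :=
  \sum_(t <- s) t.1%:~R * \prod_(i < m) xvar (f i) ^ t.2 i.

Definition is_laurent (m : nat) (F : Frac m) : Prop :=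
  exists s, F = lpoly_eval s id.

(* Lambda^{+-}_m = Z[x^{+-1}]^{S_m}: Laurent polynomials fixed by every
   permutation of the variables (sigma acts by x_i |-> x_(sigma i); this is
   independent of the chosen representation). *)
Definition sym_laurent (m : nat) (F : Frac m) : Prop :=
  exists s, F = lpoly_eval s id /\
    forall sigma : 'S_m, lpoly_eval s (fun i => sigma i) = F.

Definition vandermonde (m : nat) : Frac m :=
  \prod_(i < m) \prod_(j < m | (i < j)%N) (xvar i - xvar j).

(* Antisymmetrization sum_sigma sgn(sigma) sigma(x_1^{l_1+m-1} ... x_m^{l_m}),
   with 0-indexed exponent l_i + (m-1-i). *)
Definition alt_lambda (m : nat) (lam : 'I_m -> int) : Frac m :=
  \sum_(sigma : 'S_m) (-1) ^+ (odd_perm sigma) *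
     \prod_(i < m) xvar (sigma i) ^ (lam i + (m.-1 - i)%N%:Z).

(* E_lambda = alt_lambda / Vandermonde (the Vandermonde is nonzero). *)
Definition E_lambda (m : nat) (lam : 'I_m -> int) : Frac m :=
  alt_lambda lam / vandermonde m.

Definition H (m : nat) (k : int) : Frac m :=
  E_lambda (fun i : 'I_m => if (i : nat) == 0%N then k else 0).

(* Main.v *)
Require Import Defs.
From HB Require Import structures.
From mathcomp Require Import all_boot all_order all_algebra all_fingroup.
From mathcomp Require Import mpoly.
From mathcomp Require Import zify.
Set Implicit Arguments. Unset Strict Implicit. Unset Printing Implicit Defensive.
Import Order.TTheory GRing.Theory Num.Theory.
Local Open Scope ring_scope.


Notation tf := (@FracField.tofrac {mpoly int[_]}).

Lemma xvar_neq0 m (i : 'I_m) : xvar i != 0.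
Proof.
rewrite /xvar tofrac_eq0; apply/eqP => h.
have := congr1 (mcoeff U_(i)) h; rewrite mcoeffXU eqxx mcoeff0.
by move/eqP; rewrite oner_eq0.
Qed.

Section Sub.
End Sub.

Lemma Sin0 (R : ringType) (S : {pred R}) : subring_closed S -> 0 \in S.
Proof. by case=> h1 hB _; rewrite -(subrr 1) hB. Qed.
Lemma SinN (R : ringType) (S : {pred R}) x : subring_closed S -> x \in S -> - x \in S.
Proof. move=> hS hx; case: (hS)=> h1 hB _; by rewrite -sub0r hB // Sin0. Qed.
Lemma SinD (R : ringType) (S : {pred R}) x y : subring_closed S -> x \in S -> y \in S -> x + y \in S.
Proof. move=> hS hx hy; case: (hS)=> h1 hB _; by rewrite -[y]opprK hB // SinN. Qed.
Lemma SinB (R : ringType) (S : {pred R}) x y : subring_closed S -> x \in S -> y \in S -> x - y \in S.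
Proof. by move=> hS hx hy; case: (hS)=> h1 hB _; rewrite hB. Qed.
Lemma SinM (R : ringType) (S : {pred R}) x y : subring_closed S -> x \in S -> y \in S -> x * y \in S.
Proof. by move=> hS hx hy; case: (hS)=> h1 _ hM; rewrite hM. Qed.
Lemma Sin1 (R : ringType) (S : {pred R}) : subring_closed S -> 1 \in S.
Proof. by case. Qed.
Lemma SinX (R : ringType) (S : {pred R}) x n : subring_closed S -> x \in S -> x ^+ n \in S.
Proof.
move=> hS hx; elim: n => [|n ih]; first by rewrite expr0 Sin1.
by rewrite exprS SinM.
Qed.
Lemma Sinnat (R : ringType) (S : {pred R}) n : subring_closed S -> n%:R \in S.
Proof.
move=> hS; elim: n => [|n ih]; first by rewrite Sin0.
by rewrite mulrS SinD // Sin1.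
Qed.
Lemma Sinint (R : ringType) (S : {pred R}) (z : int) : subring_closed S -> z%:~R \in S.
Proof.
move=> hS; case: z => n; first exact: Sinnat.
by rewrite NegzE mulrNz SinN // Sinnat.
Qed.
Lemma Sinsum (R : ringType) (S : {pred R}) I (r : seq I) (P : pred I) F :
  subring_closed S -> (forall i, P i -> F i \in S) -> \sum_(i <- r | P i) F i \in S.
Proof.
move=> hS hF; apply: (big_ind (fun x => x \in S)); first exact: Sin0.
  by move=> x y; apply: SinD. exact: hF.
Qed.
Lemma Sinprod (R : ringType) (S : {pred R}) I (r : seq I) (P : pred I) F :
  subring_closed S -> (forall i, P i -> F i \in S) -> \prod_(i <- r | P i) F i \in S.
Proof.
move=> hS hF; apply: (big_ind (fun x => x \in S)); first exact: Sin1.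
  by move=> x y; apply: SinM. exact: hF.
Qed.

Definition Pol m (s0 : seq (int * 'X_{1..m})) : {mpoly int[m]} :=
  \sum_(t <- s0) t.1%:MP * 'X_[t.2].

Lemma tf_mpolyC m (c : int) : tf (c%:MP : {mpoly int[m]}) = c%:~R.
Proof. by rewrite -[c in c%:MP]intz !rmorph_int. Qed.

Lemma tf_msym_Pol m s0 (sigma : 'S_m) :
  tf (msym sigma (Pol s0)) =
  \sum_(t <- s0) t.1%:~R * \prod_(i < m) xvar (sigma i) ^+ t.2 i.
Proof.
rewrite /Pol [msym _ _]raddf_sum rmorph_sum; apply: eq_bigr => t _.
rewrite /= msymM rmorphM /msym mmapC mmapX /mmap1. congr (_ * _); first exact: tf_mpolyC.
by rewrite rmorph_prod; apply: eq_bigr => i _; rewrite rmorphXn.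
Qed.

Definition conv m (s0 : seq (int * 'X_{1..m})) : seq (int * {ffun 'I_m -> int}) :=
  [seq (t.1, [ffun i => (t.2 i)%:Z] : {ffun 'I_m -> int}) | t : int * 'X_{1..m} <- s0].

Lemma lpoly_conv m s0 (f : 'I_m -> 'I_m) :
  lpoly_eval (conv s0) f = \sum_(t <- s0) t.1%:~R * \prod_(i < m) xvar (f i) ^+ t.2 i.
Proof.
rewrite /lpoly_eval big_map; apply: eq_bigr => t _ /=.
by congr (_ * _); apply: eq_bigr => i _; rewrite ffunE.
Qed.

Lemma sym_poly m (P : {mpoly int[m]}) : P \is symmetric -> sym_laurent (tf P).
Proof.
move=> /issymP hP.
pose s0 := [seq (P@_mn, mn) | mn <- msupp P].
have eP : Pol s0 = P.
  rewrite [RHS]mpolyE /Pol big_map; apply: eq_bigr => mn _ /=.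
  by rewrite mul_mpolyC.
exists (conv s0); split.
  rewrite lpoly_conv -{1}eP -(msym1m (Pol s0)) tf_msym_Pol.
  by apply: eq_bigr => t _; rewrite (eq_bigr (fun i => xvar i ^+ t.2 i)) // => i _; rewrite perm1.
by move=> sigma; rewrite lpoly_conv -tf_msym_Pol eP hP.
Qed.

Definition elsym m (j : nat) : Frac m := tf (mesym m int j).

Lemma sym_esym m j : sym_laurent (elsym m j).
Proof. by apply: sym_poly; apply: mesym_sym. Qed.

Lemma esym_top m : elsym m m = \prod_(i < m) xvar i.
Proof. by rewrite /elsym mesymnnE rmorph_prod. Qed.

Lemma prod_perm m (sigma : 'S_m) (F : 'I_m -> Frac m) :
  \prod_(i < m) F (sigma i) = \prod_(i < m) F i.
Proof. by rewrite [RHS](reindex_inj (@perm_inj _ sigma)). Qed.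

Lemma esym_top_neq0 m : elsym m m != 0.
Proof. by rewrite esym_top prodf_seq_neq0; apply/allP => i _; rewrite xvar_neq0. Qed.

Lemma sym_esym_inv m : sym_laurent ((elsym m m)^-1).
Proof.
exists [:: (1, [ffun=> -1])].
have E f : lpoly_eval [:: (1, [ffun=> -1])] f = (\prod_(i < m) xvar (f i))^-1.
  rewrite /lpoly_eval big_seq1 /= mul1r -prodfV; apply: eq_bigr => i _.
  by rewrite ffunE.
split; first by rewrite E esym_top.
by move=> sigma; rewrite E prod_perm esym_top.
Qed.






Lemma lpoly_nil m f : lpoly_eval (m:=m) [::] f = 0.
Proof. by rewrite /lpoly_eval big_nil. Qed.

Lemma lpoly_cat m s1 s2 f :
  lpoly_eval (m:=m) (s1 ++ s2) f = lpoly_eval s1 f + lpoly_eval s2 f.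
Proof. by rewrite /lpoly_eval big_cat. Qed.

Definition lneg m (s : seq (int * {ffun 'I_m -> int})) :=
  [seq (- t.1, t.2) | t <- s].

Lemma lpoly_opp m s f : lpoly_eval (m:=m) (lneg s) f = - lpoly_eval s f.
Proof.
rewrite /lpoly_eval big_map -sumrN; apply: eq_bigr => t _ /=.
by rewrite mulrNz mulNr.
Qed.

Definition lone m : seq (int * {ffun 'I_m -> int}) := [:: (1, [ffun=> 0])].

Lemma lpoly_one m f : lpoly_eval (m:=m) (lone m) f = 1.
Proof.
rewrite /lpoly_eval big_seq1 /= mul1r big1 // => i _.
by rewrite ffunE expr0z.
Qed.

Definition lmul m (s1 s2 : seq (int * {ffun 'I_m -> int})) :=
  [seq (a.1 * b.1, [ffun i => a.2 i + b.2 i] : {ffun 'I_m -> int}) | a : int * {ffun 'I_m -> int} <- s1, b : int * {ffun 'I_m -> int} <- s2].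

Lemma lpoly_mul m s1 s2 f :
  lpoly_eval (m:=m) (lmul s1 s2) f = lpoly_eval s1 f * lpoly_eval s2 f.
Proof.
rewrite /lpoly_eval /lmul big_allpairs_dep mulr_suml; apply: eq_bigr => a _.
rewrite mulr_sumr; apply: eq_bigr => b _ /=.
rewrite intrM.
have -> : \prod_(i < m) xvar (f i) ^ [ffun i => a.2 i + b.2 i] i =
  (\prod_(i < m) xvar (f i) ^ a.2 i) * \prod_(i < m) xvar (f i) ^ b.2 i.
  by rewrite -big_split; apply: eq_bigr => i _; rewrite ffunE expfzDr // xvar_neq0.
by rewrite mulrACA.
Qed.

Definition sym_with m (F : Frac m) s :=
  F = lpoly_eval s id /\ forall sigma : 'S_m, lpoly_eval s (fun i => sigma i) = F.

Lemma sym_laurent0 m : sym_laurent (0 : Frac m).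
Proof. by exists [::]; split => [|s]; rewrite lpoly_nil. Qed.

Lemma sym_laurent1 m : sym_laurent (1 : Frac m).
Proof. by exists (lone m); split => [|s]; rewrite lpoly_one. Qed.

Lemma sym_laurentD m (F G : Frac m) :
  sym_laurent F -> sym_laurent G -> sym_laurent (F + G).
Proof.
move=> [s1 [e1 h1]] [s2 [e2 h2]]; exists (s1 ++ s2).
by split => [|s]; rewrite lpoly_cat ?h1 ?h2 // -e1 -e2.
Qed.

Lemma sym_laurentN m (F : Frac m) : sym_laurent F -> sym_laurent (- F).
Proof.
move=> [s1 [e1 h1]]; exists (lneg s1).
by split => [|s]; rewrite lpoly_opp ?h1 // -e1.
Qed.

Lemma sym_laurentM m (F G : Frac m) :
  sym_laurent F -> sym_laurent G -> sym_laurent (F * G).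
Proof.
move=> [s1 [e1 h1]] [s2 [e2 h2]]; exists (lmul s1 s2).
by split => [|s]; rewrite lpoly_mul ?h1 ?h2 // -e1 -e2.
Qed.


Lemma viete_x m (a : 'I_m) :
  \sum_(j < m.+1) (-1) ^+ j * elsym m j * xvar a ^+ (m - j) = 0.
Proof.
have h1 : (map_poly tf (\prod_(i < m) ('X - ('X_i)%:P) : {poly {mpoly int[m]}})).[xvar a] = 0.
  rewrite rmorph_prod.
  rewrite (eq_bigr (fun i => 'X - (xvar i)%:P)); last first.
  move=> i _. exact: map_polyXsubC.
  rewrite horner_prod. apply/eqP/prodf_eq0. exists a => //. by rewrite hornerXsubC subrr.
rewrite Viete raddf_sum horner_sum in h1; rewrite -[RHS]h1; apply: eq_bigr => j _.
rewrite /=.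
rewrite scalerA map_polyZ hornerZ map_polyXn hornerXn rmorphM rmorphXn rmorphN1. done.
Qed.

Definition amat n (c : 'I_n.+1 -> int) : 'M[Frac n.+1]_n.+1 :=
  \matrix_(i, j) xvar j ^ c i.

Definition cexp n (N : int) (i : 'I_n.+1) : int :=
  if (i : nat) == 0%N then N else (n - i)%N%:Z.

Lemma det_amat n c : \det (amat (n:=n) c) =
  \sum_(s : 'S_n.+1) (-1) ^+ s * \prod_i xvar (s i) ^ c i.
Proof.
rewrite /determinant; apply: eq_bigr => s _; congr (_ * _).
by apply: eq_bigr => i _; rewrite mxE.
Qed.

Lemma H_det n k : H n.+1 k = \det (amat (cexp (n:=n) (k + n%:Z))) / vandermonde n.+1.
Proof.
rewrite /H /E_lambda /alt_lambda det_amat; congr (_ / _).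
apply: eq_bigr => s _; congr (_ * _); apply: eq_bigr => i _.
rewrite /cexp /=; case: eqP => [->|_] //.
by rewrite subn0.
Qed.

Lemma sum_pow_zero m (a : 'I_m) (N : int) :
  \sum_(j < m.+1) (-1) ^+ j * elsym m j * xvar a ^ (N - j%:Z) = 0.
Proof.
have -> : \sum_(j < m.+1) (-1) ^+ j * elsym m j * xvar a ^ (N - j%:Z) =
   xvar a ^ (N - m%:Z) * \sum_(j < m.+1) (-1) ^+ j * elsym m j * xvar a ^+ (m - j).
  rewrite mulr_sumr; apply: eq_bigr => j _.
  have hj : (j <= m)%N by rewrite -ltnS.
  have -> : N - j%:Z = (N - m%:Z) + (m - j)%N%:Z.
    by rewrite -subzn // addrA subrK.
  by rewrite expfzDr ?xvar_neq0 // mulrCA.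
by rewrite viete_x mulr0.
Qed.

Lemma rec0 n (N : int) :
  \sum_(j < n.+2) (-1) ^+ j * elsym n.+1 j * \det (amat (cexp (n:=n) (N - j%:Z))) = 0.
Proof.
under eq_bigr => j _ do rewrite det_amat mulr_sumr.
rewrite exchange_big /= big1 // => s _.
pose R := \prod_(i < n) xvar (s (lift ord0 i)) ^ (n - lift ord0 i)%N%:Z.
have E j : \prod_i xvar (s i) ^ cexp (n:=n) (N - j%:Z) i =
    xvar (s ord0) ^ (N - j%:Z) * R.
  by rewrite big_ord_recl.
have -> : \sum_(j < n.+2) (-1) ^+ j * elsym n.+1 j *
    ((-1) ^+ s * \prod_i xvar (s i) ^ cexp (n:=n) (N - j%:Z) i) =
    ((-1) ^+ s * R) * \sum_(j < n.+2) (-1) ^+ j * elsym n.+1 j * xvar (s ord0) ^ (N - j%:Z).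
  rewrite mulr_sumr; apply: eq_bigr => j _; rewrite E.
  by rewrite [X in _ = X]mulrC -!mulrA; congr (_ * (_ * _)); exact: mulrCA.
by rewrite sum_pow_zero mulr0.
Qed.

Lemma det_zero n (N : nat) : (N < n)%N -> \det (amat (cexp (n:=n) N%:Z)) = 0.
Proof.
move=> hN.
have h2 : (n - N < n.+1)%N by rewrite ltnS leq_subr.
apply: (@determinant_alternate _ _ _ ord0 (Ordinal h2)).
  by rewrite -(inj_eq val_inj) /= eq_sym subn_eq0 leqNgt hN.
move=> j; rewrite !mxE /cexp /=.
have -> : (n - N == 0)%N = false by rewrite subn_eq0 leqNgt hN.
by rewrite subKn // ltnW.
Qed.

Lemma rev_lt n (i j : 'I_n) : (rev_ord j < rev_ord i)%N = (i < j)%N.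
Proof.
rewrite /=; have hi := ltn_ord i; have hj := ltn_ord j.
apply/idP/idP => h; lia.
Qed.

Lemma vdm_rev m : vandermonde m =
  \prod_(i < m) \prod_(j < m | (i < j)%N) (xvar (rev_ord j) - xvar (rev_ord i)).
Proof.
rewrite /vandermonde !pair_big_dep /=.
rewrite (reindex_inj (h := fun p : 'I_m * 'I_m => (rev_ord p.2, rev_ord p.1))) /=.
  by apply: eq_bigl => p; rewrite rev_lt.
by move=> [a b] [c d] /(congr1 (fun p : 'I_m * 'I_m => (rev_ord p.2, rev_ord p.1))); rewrite /= !rev_ordK.
Qed.

Lemma det_top n : \det (amat (cexp (n:=n) n%:Z)) = vandermonde n.+1.
Proof.
pose r : 'S_n.+1 := perm (@rev_ord_inj n.+1).
pose B := Vandermonde n.+1 (\row_j xvar (rev_ord j) : 'rV[Frac n.+1]_n.+1).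
have EB : amat (cexp (n:=n) n%:Z) = row_perm r (col_perm r B).
  apply/matrixP => i j; rewrite !mxE !permE rev_ordK /cexp /=.
  case: eqP => [->|_]; first by rewrite subSS subn0.
  by rewrite subSS.
rewrite EB row_permE col_permE !detM det_perm det_Vandermonde vdm_rev.
rewrite det_perm odd_permV mulrCA -signr_addb addbb mulr1.
by apply: eq_bigr => i _; apply: eq_bigr => j _; rewrite !mxE.
Qed.


Lemma elsym0 m : elsym m 0 = 1.
Proof. by rewrite /elsym mesym0E rmorph1. Qed.

Lemma xvar_sub_neq0 m (i j : 'I_m) : i != j -> xvar i - xvar j != 0.
Proof.
move=> hij; rewrite subr_eq0 /xvar tofrac_eq; apply/eqP => h.
have := congr1 (mcoeff U_(i)) h; rewrite !mcoeffXU eqxx eq_sym (negbTE hij).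
by move/eqP; rewrite oner_eq0.
Qed.

Lemma vdm_neq0 m : vandermonde m != 0.
Proof.
rewrite /vandermonde prodf_seq_neq0; apply/allP => i _; rewrite prodf_seq_neq0.
apply/allP => j _; apply/implyP => hij; apply: xvar_sub_neq0.
by rewrite -(inj_eq val_inj) /= ltn_eqF.
Qed.

Lemma h0 n : H n.+1 0 = 1.
Proof. by rewrite H_det add0r det_top divff // vdm_neq0. Qed.

Lemma hneg n (j : nat) : (j < n)%N -> H n.+1 (- (j.+1)%:Z) = 0.
Proof.
move=> hj; rewrite H_det.
have -> : - (j.+1)%:Z + n%:Z = (n - j.+1)%N%:Z by rewrite addrC subzn.
by rewrite det_zero ?mul0r //; lia.
Qed.

Lemma hrec n (k : int) :
  \sum_(j < n.+2) (-1) ^+ j * elsym n.+1 j * H n.+1 (k - j%:Z) = 0.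
Proof.
have := rec0 n (k + n%:Z) => /(congr1 (fun x => x / vandermonde n.+1)).
rewrite mul0r mulr_suml => E; rewrite -[RHS]E; apply: eq_bigr => j _.
by rewrite H_det !mulrA addrAC.
Qed.

Lemma gen_a n (P : Frac n.+1 -> Prop) :
  P 0 -> P 1 -> (forall x y, P x -> P y -> P (x + y)) -> (forall x, P x -> P (- x)) ->
  (forall x y, P x -> P y -> P (x * y)) ->
  (forall j, P (elsym n.+1 j)) -> P ((elsym n.+1 n.+1)^-1) -> forall k, P (H n.+1 k).
Proof.
move=> P0 P1 PD PN PM Pe Pinv.
have PS I (r : seq I) (Q : pred I) F : (forall i, Q i -> P (F i)) -> P (\sum_(i <- r | Q i) F i).
  by move=> hF; apply: (big_ind P) => //; apply PD.
have Psg j : P ((-1) ^+ j).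
  elim: j => [|j ih]; first by rewrite expr0.
  by rewrite exprS; apply PM => //; apply PN.
have fwd N : forall i : nat, (i <= N + n)%N -> P (H n.+1 (N%:Z - i%:Z)).
  elim: N => [|N ih] i hi.
    case: i hi => [|j] hj; first by rewrite subr0 h0.
    by rewrite sub0r hneg //; lia.
  case: i hi => [|i] hi; last first.
    have -> : (N.+1)%:Z - (i.+1)%:Z = N%:Z - i%:Z by lia.
    by apply ih; lia.
  have R := hrec n (N.+1)%:Z.
  rewrite (bigD1 ord0) //= expr0 mul1r elsym0 mul1r subr0 in R.
  rewrite subr0; move/eqP: R; rewrite addr_eq0 => /eqP ->; apply PN; apply PS.
  move=> j hj; apply PM; first by apply PM.
  have hj1 : (0 < j)%N by rewrite lt0n.
  have -> : (N.+1)%:Z - j%:Z = N%:Z - (j.-1)%:Z by lia.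
  by apply ih; have := ltn_ord j; lia.
have bwd M : forall i : nat, (i <= M + n)%N -> P (H n.+1 (- i%:Z)).
  elim: M => [|M ih] i hi.
    by rewrite -sub0r; apply fwd.
  have [hi'|hi'] := leqP i (M + n); first exact: ih.
  have ei : i = (M + n).+1 by lia.
  have R := hrec n (- M%:Z).
  rewrite (bigD1 ord_max) //= in R.
  move/eqP: R; rewrite addr_eq0 => /eqP R.
  have ec : - M%:Z - (n.+1)%:Z = - i%:Z by rewrite ei; lia.
  rewrite ec in R.
  have cn0 : (-1) ^+ n.+1 * elsym n.+1 n.+1 != 0.
    by rewrite mulf_neq0 ?signr_eq0 ?esym_top_neq0.
  have := congr1 (fun x => ((-1) ^+ n.+1 * elsym n.+1 n.+1)^-1 * x) R.
  rewrite /= (mulKf cn0) => ->.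
  apply PM; first by rewrite invr_signM; apply PM.
  apply PN; apply PS => j hj; apply PM; first by apply PM.
  have hj' : (j < n.+1)%N by have := ltn_ord j; move: hj; rewrite -(inj_eq val_inj) /=; lia.
  have -> : - M%:Z - j%:Z = - (M + j)%N%:Z by lia.
  by apply ih; lia.
move=> k; case: k => N.
  by rewrite -[Posz N]subr0; apply fwd; lia.
by rewrite NegzE; apply: (bwd N.+1); lia.
Qed.

Lemma gen_e n (S : {pred Frac n.+1}) : subring_closed S ->
  (forall k, H n.+1 k \in S) -> forall j, (j <= n.+1)%N -> elsym n.+1 j \in S.
Proof.
move=> hS hH; elim/ltn_ind => j IH hj.
case: j IH hj => [|j] IH hj; first by rewrite elsym0 Sin1.
have hjo : (j.+1 < n.+2)%N by [].
have R := hrec n (j.+1)%:Z.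
rewrite (bigD1 (Ordinal hjo)) //= subrr h0 mulr1 in R.
move/eqP: R; rewrite addr_eq0 => /eqP R.
have -> : elsym n.+1 j.+1 = (-1) ^+ j.+1 * ((-1) ^+ j.+1 * elsym n.+1 j.+1).
  by rewrite signrMK.
have Ssg k : (-1) ^+ k \in S by apply: SinX => //; apply: SinN => //; apply: Sin1.
apply: SinM => //; rewrite R; apply: SinN => //; apply: Sinsum => // i hi.
have [hij|hij] := ltnP i j.+1.
  by apply: SinM => //; apply: SinM => //; apply: IH => //; lia.
have hij' : (j.+1 < i)%N.
  by rewrite ltn_neqAle hij andbT; move: hi; rewrite -(inj_eq val_inj) /= eq_sym.
have -> : (j.+1)%:Z - (nat_of_ord i)%:Z = - ((i - j.+2)%N.+1)%:Z by lia.
by rewrite hneg ?mulr0 ?Sin0 //; have := ltn_ord i; lia.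
Qed.

Lemma gen_inv n (S : {pred Frac n.+1}) : subring_closed S ->
  (forall k, H n.+1 k \in S) -> (elsym n.+1 n.+1)^-1 \in S.
Proof.
move=> hS hH.
have R := hrec n 0.
rewrite (bigD1 ord_max) //= (bigD1 ord0) //= expr0 mul1r elsym0 mul1r subr0 h0 in R.
rewrite big1 ?addr0 in R; last first.
  move=> i /andP [hi1 hi2].
  have h1 : (0 < i)%N by rewrite lt0n.
  have h2 : (i < n.+1)%N.
    by have := ltn_ord i; move: hi1; rewrite -(inj_eq val_inj) /=; lia.
  have -> : 0 - (nat_of_ord i)%:Z = - ((i.-1).+1)%:Z by lia.
  by rewrite hneg ?mulr0 //; lia.
move/eqP: R; rewrite addr_eq0 => /eqP R.
have E : (elsym n.+1 n.+1)^-1 = - ((-1) ^+ n.+1 * H n.+1 (0 - (n.+1)%:Z)).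
  apply: (mulfI (esym_top_neq0 n.+1)).
  rewrite divff ?esym_top_neq0 // mulrN mulrCA mulrA R opprK //.
rewrite E; apply: SinN => //; apply: SinM => //.
by apply: SinX => //; apply: SinN => //; apply: Sin1.
Qed.


Lemma gen_b m (S : {pred Frac m}) : subring_closed S ->
  (forall j, (j <= m)%N -> elsym m j \in S) -> (elsym m m)^-1 \in S ->
  forall F, sym_laurent F -> F \in S.
Proof.
move=> hS he hinv F [s [eF hsym]].
pose N := (\sum_(t <- s) \sum_(i < m) `|t.2 i|)%N.
have hN : forall t, t \in s -> forall i, 0 <= t.2 i + N%:Z.
  move=> t ht i.
  have : (`|t.2 i| <= N)%N.
    rewrite /N (big_rem t) //= (bigD1 i) //= -addnA; exact: leq_addr.
  lia.
pose s0 := [seq (t.1, [multinom absz (t.2 i + N%:Z)%R | i < m]) | t : int * {ffun 'I_m -> int} <- s].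
have K : forall f : 'I_m -> 'I_m,
    \sum_(t <- s0) t.1%:~R * \prod_(i < m) xvar (f i) ^+ t.2 i =
    lpoly_eval s f * \prod_(i < m) xvar (f i) ^+ N.
  move=> f; rewrite /lpoly_eval big_map mulr_suml big_seq [RHS]big_seq.
  apply: eq_bigr => t ht /=; rewrite -mulrA; congr (_ * _).
  rewrite -big_split; apply: eq_bigr => i _ /=; rewrite mnmE.
  have -> : xvar (f i) ^+ absz (t.2 i + N%:Z) = xvar (f i) ^ ((absz (t.2 i + N%:Z))%:Z) by [].
  by rewrite gez0_abs ?hN // expfzDr ?xvar_neq0.
pose P := Pol s0.
pose E := \prod_(i < m) xvar i ^+ N.
have hP : forall sigma : 'S_m, tf (msym sigma P) = F * E.
  by move=> sigma; rewrite tf_msym_Pol K hsym (prod_perm sigma (fun j => xvar j ^+ N)).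
have symP : P \is symmetric.
  apply/issymP => sigma; apply/eqP; rewrite -tofrac_eq; apply/eqP.
  by rewrite hP -(msym1m P) hP.
have EE : E = elsym m m ^+ N by rewrite /E prodrXl esym_top.
have En0 : E != 0 by rewrite EE expf_neq0 // esym_top_neq0.
have -> : F = tf P * (elsym m m)^-1 ^+ N.
  by rewrite exprVn -EE -(msym1m P) hP mulfK.
apply: SinM => //; last exact: SinX.
have [t [ht _]] := sym_fundamental symP.
rewrite -ht comp_mpolyE rmorph_sum; apply: Sinsum => // mn _.
rewrite -mul_mpolyC rmorphM; apply: SinM => //.
  by have := Sinint (S:=S) (t@_mn) hS; rewrite -(tf_mpolyC m).
rewrite rmorph_prod; apply: Sinprod => // i _; rewrite rmorphXn; apply: SinX => //.
rewrite tnth_mktuple; apply: he; exact: ltn_ord.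
Qed.

Theorem mainTheorem4 (m : nat) :
  (forall k : int, sym_laurent (H m k)) /\
  (forall F : Frac m, sym_laurent F ->
     forall S : {pred Frac m}, subring_closed S ->
       (forall k : int, H m k \in S) -> F \in S).
Proof.
case: m => [|n].
  have H0 : forall k, H 0 k = 1.
    move=> k; rewrite /H /E_lambda /alt_lambda /vandermonde big_ord0 divr1.
    rewrite (bigD1 (1%g : 'S_0)) //= [X in _ + X]big1 ?addr0; last first.
      move=> s hs; exfalso; move: hs; have -> : s = 1%g by apply/permP => -[]. by rewrite eqxx.
    by rewrite odd_perm1 expr0 mul1r big_ord0.
  split; first by move=> k; rewrite H0; apply: sym_laurent1.
  move=> F hF S hS hH; apply: (gen_b hS) => //.
    by move=> j; rewrite leqn0 => /eqP ->; rewrite elsym0 Sin1.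
  by rewrite elsym0 invr1 Sin1.
split.
  apply: gen_a.
  - exact: sym_laurent0.
  - exact: sym_laurent1.
  - exact: sym_laurentD.
  - exact: sym_laurentN.
  - exact: sym_laurentM.
  - exact: sym_esym.
  - exact: sym_esym_inv.
move=> F hF S hS hH; apply: (gen_b hS) => //.
  exact: gen_e.
exact: gen_inv.
Qed.
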